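(* Consider the safety strategy-improvement algorithm described in the context, run on a concurrent game structure $G$ with safe set $F$, and let $v_i=\mathrm{val}_1^{\overline{\gamma}_i}(\mathrm{Safe}(F))$ be the valuation at iteration $i$. If $I=\{s\in S\setminus(W_1\cup T):\mathrm{Pre}_1(v_i)(s)>v_i(s)\}=\emptyset$ and $(\overline{A}_i\cap S)\setminus W_1=\emptyset$, then $\overline{\gamma}_i$ is an optimal strategy and $v_i=\mathrm{val}_1(\mathrm{Safe}(F))$.
   Context: Concurrent game structure $G=(S,M,\Gamma_1,\Gamma_2,\delta)$: finite states $S$, finite moves $M$, nonempty move sets $\Gamma_i(s)\subseteq M$, $\delta(s,a_1,a_2)\in\mathrm{Distr}(S)$ (simultaneous independent moves); $\mathrm{Dest}(s,a_1,a_2)=\mathrm{supp}\,\delta(s,a_1,a_2)$. A state is absorbing if every move pair leads back to it with probability 1. A selector for player $i$ assigns to each state $s$ a distribution on $\Gamma_i(s)$ (a selector at $s$ is such a distribution); $\overline{\xi}$ is the memoryless strategy playing $\xi$ forever. $\mathrm{Safe}(F)$ is the set of plays that stay in $F$ forever; $\mathrm{val}_1^{\pi_1}(\mathrm{Safe}(F))(s)=\inf_{\pi_2}\Pr_s^{\pi_1,\pi_2}(\mathrm{Safe}(F))$, $\mathrm{val}_1(\mathrm{Safe}(F))=\sup_{\pi_1}\mathrm{val}_1^{\pi_1}(\mathrm{Safe}(F))$ (over all strategies); $\pi_1$ is optimal if $\mathrm{val}_1^{\pi_1}=\mathrm{val}_1$. For a valuation $v:S\to[0,1]$ and selectors: $\mathrm{Pre}_{\xi_1,\xi_2}(v)(s)=\sum_{a,b}\sum_t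 v(t)\delta(s,a,b)(t)\xi_1(s)(a)\xi_2(s)(b)$; $\mathrm{Pre}_{\xi_1,b}$ uses the point mass on move $b$ for player 2; $\mathrm{Pre}_{1:\xi_1}(v)(s)=\inf_{\xi_2}\mathrm{Pre}_{\xi_1,\xi_2}(v)(s)$; $\mathrm{Pre}_1(v)(s)=\sup_{\xi_1}\mathrm{Pre}_{1:\xi_1}(v)(s)$. Let $T=S\setminus F$ and $W_1=\{s:\mathrm{val}_1(\mathrm{Safe}(F))(s)=1\}$; standing assumption: all states of $W_1\cup T$ are absorbing. $\mathrm{OptSel}(v,s)=\{\xi_1\text{ selector at }s:\mathrm{Pre}_{1:\xi_1}(v)(s)=\mathrm{Pre}_1(v)(s)\}$; for $\xi_1\in\mathrm{OptSel}(v,s)$, $\mathrm{CountOpt}(v,s,\xi_1)=\{b\in\Gamma_2(s):\mathrm{Pre}_{\xi_1,b}(v)(s)=\mathrm{Pre}_1(v)(s)\}$; $\mathrm{OptSelCount}(v,s)$ is the set of pairs $(A,B)$ with $A\subseteq\Gamma_1(s)$, $B\subseteq\Gamma_2(s)$ such that some $\xi_1\in\mathrm{OptSel}(v,s)$ has support $A$ and $\mathrm{CountOpt}(v,s,\xi_1)=B$. Turn-based reduction $\mathrm{TB}(G,v,F)=(\overline{G}_v,\overline{F})$: a turn-based stochastic game with player-1 states $S$, player-2 states $(s,A,B)$ for $(A,B)\in\mathrm{OptSelCount}(v,s)$, random states $(s,A,b)$ for such $(A,B)$ and $b\in B$; edges $s\to(s,A,B)$, $(s,A,B)\to(s,A,b)$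 for $b\in B$, and $(s,A,b)\to t$ for $t\in\bigcup_{a\in A}\mathrm{Dest}(s,a,b)$; player $i$ picks the successor at its states, random states choose uniformly among successors. $\overline{F}=F\cup\{(s,A,B):s\in F\}\cup\{(s,A,b):s\in F\}$. The almost-sure winning states for $\mathrm{Safe}(\overline{F})$ are those from which player 1 can ensure $\mathrm{Safe}(\overline{F})$ with probability 1 against all player-2 strategies. Algorithm: $\gamma_0=\xi^{\mathrm{unif}}$ (uniform over $\Gamma_1(s)$ at every $s$); $v_i=\mathrm{val}_1^{\overline{\gamma}_i}(\mathrm{Safe}(F))$. At iteration $i$: let $I=\{s\in S\setminus(W_1\cup T):\mathrm{Pre}_1(v_i)(s)>v_i(s)\}$. If $I\ne\emptyset$: take a selector $\xi_1$ with $\mathrm{Pre}_{1:\xi_1}(v_i)(s)=\mathrm{Pre}_1(v_i)(s)$ for $s\in I$ and let $\gamma_{i+1}=\xi_1$ on $I$, $=\gamma_i$ elsewhere. Otherwise: compute $(\overline{G}_{v_i},\overline{F})=\mathrm{TB}(G,v_i,F)$, the set $\overline{A}_i$ of almost-sure winning states for $\mathrm{Safe}(\overline{F})$ in $\overline{G}_{v_i}$, and a pure memoryless almost-sure winning strategy $\overline{\pi}_1$ from $\overline{A}_i$; let $U=(\overline{A}_i\cap S)\setminus W_1$; if $U\ne\emptyset$, let $\gamma_{i+1}=\gamma_i$ outside $U$ and, for $s\in U$ with $\overline{\pi}_1(s)=(s,A,B)$, let $\gamma_{i+1}(s)$ be a selector $\xi\in\mathrm{OptSel}(v_i,s)$ with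 support $A$ and $\mathrm{CountOpt}(v_i,s,\xi)=B$. The algorithm stops when $I=\emptyset$ and $U=\emptyset$. *)

(* Defs.v *)
From HB Require Import structures.
From mathcomp Require Import all_boot all_order all_algebra.
From mathcomp Require Import boolp reals.
Set Implicit Arguments. Unset Strict Implicit. Unset Printing Implicit Defensive.
Import Order.TTheory GRing.Theory Num.Theory.
Local Open Scope ring_scope.

Section ConcurrentGames.
Variable R : realType.

Record cgame (S M : finType) := CGame {
  mov1 : S -> {set M};
  mov2 : S -> {set M};
  trans : S -> M -> M -> S -> R }.

Definition is_distr (T : finType) (f : T -> R) :=
  (forall x, 0 <= f x) /\ \sum_x f x = 1.

Definition dist_on (T : finType) (A : {set T}) (f : T -> R) :=
  is_distr f /\ forall x, f x != 0 -> x \in A.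

Definition dirac (T : finType) (x : T) : T -> R := fun y => (y == x)%:R.

Definition cgame_wf (S M : finType) (G : cgame S M) :=
  forall s, mov1 G s != finset.set0 /\ mov2 G s != finset.set0 /\
            forall a b, is_distr (trans G s a b).

(* Strategies: (past states, current state) |-> distribution on moves. *)
Definition strategy (S M : finType) := seq S -> S -> M -> R.

Definition strat1 (S M : finType) (G : cgame S M) (pi : strategy S M) :=
  forall h s, dist_on (mov1 G s) (pi h s).
Definition strat2 (S M : finType) (G : cgame S M) (pi : strategy S M) :=
  forall h s, dist_on (mov2 G s) (pi h s).

Fixpoint safe_n (S M : finType) (G : cgame S M) (F : {set S})
    (pi1 pi2 : strategy S M) (n : nat) (h : seq S) (s : S) : R :=
  if s \in F then
    match n with
    | 0 => 1
    | n'.+1 => \sum_a \sum_b (pi1 h s a * pi2 h s b *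
                 \sum_t (trans G s a b t * safe_n G F pi1 pi2 n' (rcons h s) t))
    end
  else 0.

(* Pr_s^{pi1,pi2}(Safe(F)) = lim_n Pr(stay in F for n steps)
   (continuity from above of the play measure); the sequence is
   nonincreasing, so the limit is the infimum. *)
Definition Pr_safe (S M : finType) (G : cgame S M) (F : {set S})
    (pi1 pi2 : strategy S M) (s : S) : R :=
  inf (fun r => exists n, r = safe_n G F pi1 pi2 n [::] s).

Definition val1_strat (S M : finType) (G : cgame S M) (F : {set S})
    (pi1 : strategy S M) (s : S) : R :=
  inf (fun r => exists pi2, strat2 G pi2 /\ r = Pr_safe G F pi1 pi2 s).

Definition value1 (S M : finType) (G : cgame S M) (F : {set S}) (s : S) : R :=
  sup (fun r => exists pi1, strat1 G pi1 /\ r = val1_strat G F pi1 s).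

Definition optimal (S M : finType) (G : cgame S M) (F : {set S})
    (pi1 : strategy S M) :=
  strat1 G pi1 /\ forall s, val1_strat G F pi1 s = value1 G F s.

Definition selector (S M : finType) (G : cgame S M) (xi : S -> M -> R) :=
  forall s, dist_on (mov1 G s) (xi s).

Definition memoryless (S M : finType) (xi : S -> M -> R) : strategy S M :=
  fun _ s => xi s.

Definition preP (S M : finType) (G : cgame S M) (v : S -> R) (s : S)
    (x1 x2 : M -> R) : R :=
  \sum_a \sum_b \sum_t v t * trans G s a b t * x1 a * x2 b.

Definition pre1x (S M : finType) (G : cgame S M) (v : S -> R) (s : S)
    (x1 : M -> R) : R :=
  inf (fun r => exists x2, dist_on (mov2 G s) x2 /\ r = preP G v s x1 x2).

Definition pre1 (S M : finType) (G : cgame S M) (v : S -> R) (s : S) : R :=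
  sup (fun r => exists x1, dist_on (mov1 G s) x1 /\ r = pre1x G v s x1).

Definition optsel (S M : finType) (G : cgame S M) (v : S -> R) (s : S)
    (x1 : M -> R) :=
  dist_on (mov1 G s) x1 /\ pre1x G v s x1 = pre1 G v s.

Definition countopt_is (S M : finType) (G : cgame S M) (v : S -> R) (s : S)
    (x1 : M -> R) (B : {set M}) :=
  forall b, b \in B <-> (b \in mov2 G s /\ preP G v s x1 (dirac b) = pre1 G v s).

Definition optselcount (S M : finType) (G : cgame S M) (v : S -> R) (s : S)
    (A B : {set M}) :=
  exists x1, optsel G v s x1 /\ (forall a, a \in A <-> x1 a != 0) /\
             countopt_is G v s x1 B.

(* vertices: s (player 1), (s,A,B) (player 2), (s,A,b) (random) *)
Notation tbV S M := (S + ((S * {set M} * {set M}) + (S * {set M} * M)))%type.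

Inductive owner := P1 | P2 | Rnd.

Definition tb_owner (S M : finType) (x : tbV S M) : owner :=
  match x with inl _ => P1 | inr (inl _) => P2 | inr (inr _) => Rnd end.

(* Only vertices (s,A,B) with (A,B) in OptSelCount(v,s), and (s,A,b) with
   b in such a B, are states of the reduction; the remaining elements of the
   carrier type are unreachable from S and are given a self-loop. *)
Definition tb_edge (S M : finType) (G : cgame S M) (v : S -> R)
    (x y : tbV S M) : Prop :=
  match x with
  | inl s => exists A B, optselcount G v s A B /\ y = inr (inl (s, A, B))
  | inr (inl (s, A, B)) =>
      (optselcount G v s A B /\ exists b, b \in B /\ y = inr (inr (s, A, b)))
      \/ (~ optselcount G v s A B /\ y = x)
  | inr (inr (s, A, b)) =>
      ((exists B, optselcount G v s A B /\ b \in B) /\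
         exists a t, a \in A /\ trans G s a b t != 0 /\ y = inl t)
      \/ (~ (exists B, optselcount G v s A B /\ b \in B) /\ y = x)
  end.

Definition tb_succ (S M : finType) (G : cgame S M) (v : S -> R) (x : tbV S M)
  : {set tbV S M} := [set y | `[< tb_edge G v x y >]].

(* the turn-based stochastic game, viewed as a concurrent game in which the
   non-owner has a single (dummy) move *)
Definition tb_game (S M : finType) (G : cgame S M) (v : S -> R)
  : cgame (tbV S M) (tbV S M) :=
  CGame (fun x => if tb_owner x is P1 then tb_succ G v x else [set x])
        (fun x => if tb_owner x is P2 then tb_succ G v x else [set x])
        (fun x a b y => match tb_owner x with
                        | P1 => dirac a y
                        | P2 => dirac b y
                        | Rnd => if y \in tb_succ G v x
                                 then (#|tb_succ G v x|%:R)^-1 else 0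
                        end).

Definition tb_F (S M : finType) (F : {set S}) : {set tbV S M} :=
  [set x | match x with
           | inl s => s \in F
           | inr (inl (s, _, _)) => s \in F
           | inr (inr (s, _, _)) => s \in F
           end].

Definition as_win (S M : finType) (G : cgame S M) (v : S -> R) (F : {set S})
    (x : tbV S M) :=
  exists pi1, strat1 (tb_game G v) pi1 /\
    forall pi2, strat2 (tb_game G v) pi2 ->
      Pr_safe (tb_game G v) (tb_F M F) pi1 pi2 x = 1.

Definition pm_strat (S M : finType) (p : tbV S M -> tbV S M)
  : strategy (tbV S M) (tbV S M) :=
  fun _ x => if tb_owner x is P1 then dirac (p x) else dirac x.

Definition pm_as_winning (S M : finType) (G : cgame S M) (v : S -> R)
    (F : {set S}) (p : tbV S M -> tbV S M) :=
  (forall x, tb_owner x = P1 -> p x \in tb_succ G v x) /\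
  forall x, as_win G v F x ->
    forall pi2, strat2 (tb_game G v) pi2 ->
      Pr_safe (tb_game G v) (tb_F M F) (pm_strat p) pi2 x = 1.

Definition W1 (S M : finType) (G : cgame S M) (F : {set S}) (s : S) :=
  value1 G F s = 1.

Definition vals (S M : finType) (G : cgame S M) (F : {set S})
    (gamma : S -> M -> R) : S -> R :=
  val1_strat G F (memoryless gamma).

Definition improvable (S M : finType) (G : cgame S M) (F : {set S})
    (gamma : S -> M -> R) (s : S) :=
  ~ W1 G F s /\ s \in F /\ vals G F gamma s < pre1 G (vals G F gamma) s.

Definition in_U (S M : finType) (G : cgame S M) (F : {set S})
    (gamma : S -> M -> R) (s : S) :=
  as_win G (vals G F gamma) F (inl s) /\ ~ W1 G F s.

Definition unif_sel (S M : finType) (G : cgame S M) : S -> M -> R :=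
  fun s a => if a \in mov1 G s then (#|mov1 G s|%:R)^-1 else 0.

(* one iteration gamma_i -> gamma_{i+1} (the choices are nondeterministic) *)
Definition alg_step (S M : finType) (G : cgame S M) (F : {set S})
    (gamma gamma' : S -> M -> R) :=
  let v := vals G F gamma in
  ((exists s, improvable G F gamma s) /\
    exists xi1, selector G xi1 /\
      (forall s, improvable G F gamma s -> pre1x G v s (xi1 s) = pre1 G v s) /\
      (forall s, (improvable G F gamma s -> gamma' s = xi1 s) /\
                 (~ improvable G F gamma s -> gamma' s = gamma s)))
  \/
  ((forall s, ~ improvable G F gamma s) /\
    exists p, pm_as_winning G v F p /\ (exists s, in_U G F gamma s) /\
      forall s,
        (in_U G F gamma s -> forall A B, p (inl s) = inr (inl (s, A, B)) ->
           optsel G v s (gamma' s) /\ (forall a, a \in A <-> gamma' s a != 0) /\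
           countopt_is G v s (gamma' s) B) /\
        (~ in_U G F gamma s -> gamma' s = gamma s)).

Definition alg_run (S M : finType) (G : cgame S M) (F : {set S})
    (gammas : nat -> S -> M -> R) (i : nat) :=
  gammas 0%N = unif_sel G /\
  forall k, (k < i)%N -> alg_step G F (gammas k) (gammas k.+1).

End ConcurrentGames.

Notation tbV S M := (S + ((S * {set M} * {set M}) + (S * {set M} * M)))%type.

(* Main.v *)
Require Import Defs.
From HB Require Import structures.
From mathcomp Require Import all_boot all_order all_algebra.
From mathcomp Require Import boolp reals.
From mathcomp Require Import classical_sets topology normedtype derive.
From mathcomp Require Import ring lra.
Import Order.TTheory GRing.Theory Num.Theory.
Import numFieldNormedType.Exports.
Local Open Scope ring_scope.
Set Implicit Arguments. Unset Strict Implicit. Unset Printing Implicit Defensive.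

Section SetLemmas.
Variable R : realType.
Implicit Types (E : set R).

Lemma infP_le E c x : (forall y, E y -> c <= y) -> E x -> inf E <= x.
Proof. by move=> lb Ex; apply: ge_inf => //; exists c => y /lb. Qed.

Lemma infP_ge E c : (exists x, E x) -> (forall y, E y -> c <= y) -> c <= inf E.
Proof. by move=> [x Ex] lb; apply: lb_le_inf => //; exists x. Qed.

Lemma infP_approx E c eps : 0 < eps -> (exists x, E x) ->
  (forall y, E y -> c <= y) -> exists2 x, E x & x < inf E + eps.
Proof.
move=> e0 [x Ex] lb; apply: inf_adherent => //; split; first by exists x.
by exists c => y /lb.
Qed.

Lemma supP_le E c x : (forall y, E y -> y <= c) -> E x -> x <= sup E.
Proof. by move=> ub Ex; apply: sup_upper_bound => //; split; [exists x|exists c => y /ub]. Qed.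

Lemma supP_ge E c : (exists x, E x) -> (forall y, E y -> y <= c) -> sup E <= c.
Proof. by move=> [x Ex] ub; apply: ge_sup => //; exists x. Qed.

Lemma supP_approx E c eps : 0 < eps -> (exists x, E x) ->
  (forall y, E y -> y <= c) -> exists2 x, E x & sup E - eps < x.
Proof.
move=> e0 [x Ex] ub; apply: sup_adherent => //; split; first by exists x.
by exists c => y /ub.
Qed.

End SetLemmas.

Section Distr.
Variables (R : realType) (A : finType).

Lemma distr_ge0 (f : A -> R) (hf : is_distr f) x : 0 <= f x.
Proof. by case: hf => H _; apply: H. Qed.

Lemma distr_sum (f : A -> R) : is_distr f -> \sum_x f x = 1.
Proof. by case. Qed.

Lemma distr_le1 (f : A -> R) (hf : is_distr f) x : f x <= 1.
Proof.
move: hf => [H1 H2]; rewrite -H2 (bigD1 x) //= lerDl sumr_ge0 // => y _; exact: H1.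
Qed.

Lemma dirac_distr (x : A) : is_distr (dirac R x).
Proof.
split; first by move=> y; rewrite /dirac ler0n.
by rewrite (bigD1 x) //= /dirac eqxx big1 ?addr0 // => y /negPf ->.
Qed.

Lemma dirac_on (B : {set A}) (x : A) : x \in B -> dist_on B (dirac R x).
Proof.
move=> xB; split; first exact: dirac_distr.
move=> y; rewrite /dirac; case: (y =P x) => [->|] //=; by rewrite eqxx.
Qed.

End Distr.

Section Step.
Variables (R : realType) (A T : finType).

Definition step (p q : A -> R) (tr : A -> A -> T -> R) (f : T -> R) :=
  \sum_a \sum_b (p a * q b * \sum_t (tr a b t * f t)).

Variables (p q : A -> R) (tr : A -> A -> T -> R).
Hypotheses (hp : is_distr p) (hq : is_distr q) (htr : forall a b, is_distr (tr a b)).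

Lemma step_le f g : (forall t, f t <= g t) -> step p q tr f <= step p q tr g.
Proof.
move=> fg; apply: ler_sum => a _; apply: ler_sum => b _.
apply: ler_wpM2l; first by apply: mulr_ge0; [exact: (distr_ge0 hp)|exact: (distr_ge0 hq)].
apply: ler_sum => t _; apply: ler_wpM2l; [exact: (distr_ge0 (htr a b)) | exact: fg].
Qed.

Lemma step_cst c : step p q tr (fun _ => c) = c.
Proof.
rewrite /step.
transitivity (\sum_a \sum_b (p a * q b * c)).
  apply: eq_bigr => a _; apply: eq_bigr => b _.
  by rewrite -big_distrl /= (distr_sum (htr a b)) mul1r.
transitivity (\sum_a (p a * c)).
  by apply: eq_bigr => a _; rewrite -big_distrl -big_distrr /= (distr_sum hq) mulr1.
by rewrite -big_distrl /= (distr_sum hp) mul1r.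
Qed.

Lemma step_add f g : step p q tr (fun t => f t + g t) = step p q tr f + step p q tr g.
Proof.
rewrite /step -big_split /=; apply: eq_bigr => a _; rewrite -big_split /=.
apply: eq_bigr => b _; rewrite -mulrDr -big_split /=; congr (_ * _).
by apply: eq_bigr => t _; rewrite mulrDr.
Qed.

Lemma step_addc f c : step p q tr (fun t => f t + c) = step p q tr f + c.
Proof. by rewrite (step_add f (fun _ => c)) step_cst. Qed.

Lemma step_ge0 f : (forall t, 0 <= f t) -> 0 <= step p q tr f.
Proof. by move=> H; rewrite -(step_cst 0); apply: step_le. Qed.

Lemma step_le1 f : (forall t, f t <= 1) -> step p q tr f <= 1.
Proof. by move=> H; rewrite -(step_cst 1); apply: step_le. Qed.

End Step.

Section Wrap_A1.
Import Num.Def.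
Local Open Scope classical_set_scope.

Section Anal.
Variable R : realType.

Lemma coord_le n (v : 'rV[R]_n) i : `|v ord0 i| <= `|v|.
Proof.
have /mapP[j Hj ->] : `|v ord0 i| \in [seq `|v x.1 x.2| | x : 'I_1 * 'I_n].
  by apply/mapP; exists (ord0, i) => //=; rewrite mem_enum.
by rewrite [leRHS]/normr /= mx_normrE; apply/bigmax_geP; right => /=; exists j.
Qed.

Lemma lip_cont n (f : 'rV[R]_n -> R) K : 0 <= K ->
  (forall v w, `|f v - f w| <= K * `|v - w|) -> continuous f.
Proof.
move=> K0 H v; apply/(@cvgrPdist_lt _ _ _ _ (nbhs_filter v)) => e e0.
apply/nbhs_ballP; exists (e / (K + 1)).
  by rewrite /= divr_gt0 // ltr_wpDl.
move=> w; rewrite mx_norm_ball /= => vw; apply: le_lt_trans (H v w) _.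
have K1 : 0 < K + 1 by rewrite ltr_wpDl.
apply: le_lt_trans (ler_wpM2l K0 (ltW vw)) _.
rewrite mulrA ltr_pdivrMr // mulrDr mulr1 [K * e]mulrC ltrDl //.
Qed.

End Anal.

End Wrap_A1.

Section Wrap_A2.
Import Num.Def.
Local Open Scope classical_set_scope.

Section Argmax.
Variables (R : realType) (M : finType).

Definition toF (v : 'rV[R]_#|M|) : M -> R := fun a => v ord0 (enum_rank a).

Lemma sum_rankF (F : 'I_#|M| -> R) : \sum_a F (enum_rank a) = \sum_i F i.
Proof.
rewrite [RHS](reindex (@enum_rank M)) //.
by exists enum_val => i _; [rewrite enum_rankK|rewrite enum_valK].
Qed.

Lemma sum_le_card n (f : 'I_n -> R) c : (forall i, f i <= c) -> \sum_i f i <= n%:R * c.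
Proof.
move=> H; apply: le_trans (ler_sum _ (fun i _ => H i)) _.
by rewrite sumr_const card_ord mulr_natl.
Qed.

Lemma toF_lip (v w : 'rV[R]_#|M|) : \sum_a `|toF v a - toF w a| <= #|M|%:R * `|v - w|.
Proof.
rewrite /toF (sum_rankF (fun i => `|v ord0 i - w ord0 i|)).
apply: sum_le_card => i.
by have := coord_le (v - w) i; rewrite !mxE.
Qed.

Variables (B : {set M}) (g : (M -> R) -> R) (K : R).
Hypotheses (K0 : 0 <= K) (Bne : B != finset.set0)
  (glip : forall x y, g x <= g y + K * \sum_a `|x a - y a|).

Let Ai (i : 'I_#|M|) : set R := if enum_val i \in B then `[0, 1] else [set 0].
Let A : set 'rV[R]_#|M| :=
  [set v | forall i, Ai i (v ord0 i)] `&` [set v | \sum_i v ord0 i = 1].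

Lemma A_compact : compact A.
Proof.
apply: compact_closedI.
  apply: rV_compact => i; rewrite /Ai; case: ifP => _.
    exact: segment_compact.
  exact: compact_set1.
apply: (@preimage_closed _ _ (fun v : 'rV[R]_#|M| => \sum_i v ord0 i) [set x | x = 1]); last exact: closed_eq.
move=> v _; apply: (@lip_cont _ _ _ #|M|%:R) => // x y.
rewrite -sumrB; apply: le_trans (ler_norm_sum _ _ _) _.
by apply: sum_le_card => i; have := coord_le (x - y) i; rewrite !mxE.
Qed.

Lemma in_A (y : M -> R) : dist_on B y -> A (\row_i y (enum_val i)).
Proof.
move=> [yd ysupp]; have [y0 y1] := yd; split.
  move=> i; rewrite /Ai mxE; case: ifP => iB.
    by rewrite /= in_itv /= y0 /=; apply: (distr_le1 yd).
  by apply/eqP/negPn/negP => /ysupp; rewrite iB.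
rewrite /= -y1 (reindex (@enum_rank M)) /=; last first.
  by exists enum_val => i _; [rewrite enum_rankK|rewrite enum_valK].
by apply: eq_bigr => a _; rewrite mxE enum_rankK.
Qed.

Lemma toF_row (y : M -> R) : toF (\row_i y (enum_val i)) = y.
Proof. by apply: funext => a; rewrite /toF mxE enum_rankK. Qed.

Lemma A_dist (c : 'rV[R]_#|M|) : A c -> dist_on B (toF c).
Proof.
move=> [H1 H2]; split; first split.
- move=> a; have := H1 (enum_rank a); rewrite /Ai /toF; case: ifP => _.
    by rewrite /= in_itv /= => /andP[].
  by move=> ->.
- by rewrite /toF (sum_rankF (fun i => c ord0 i)).
move=> a; rewrite /toF; have := H1 (enum_rank a); rewrite /Ai enum_rankK.
by case: ifP => // _ /= ->; rewrite eqxx.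
Qed.

Lemma argmax_exists : exists2 x, dist_on B x & forall y, dist_on B y -> g y <= g x.
Proof.
have [b bB] : exists b, b \in B by case/set0Pn: Bne => b; exists b.
have Ane : A !=set0.
  by exists (\row_i dirac R b (enum_val i)); apply: in_A; apply: dirac_on.
have fcont : continuous (fun v => g (toF v)).
  apply: (@lip_cont _ _ _ (K * #|M|%:R)); first by rewrite mulr_ge0.
  move=> v w.
  have h1 : g (toF v) <= g (toF w) + K * (#|M|%:R * `|v - w|).
    by apply: le_trans (glip (toF v) (toF w)) _; rewrite lerD2l ler_wpM2l // toF_lip.
  have h2 : g (toF w) <= g (toF v) + K * (#|M|%:R * `|v - w|).
    by apply: le_trans (glip (toF w) (toF v)) _; rewrite lerD2l ler_wpM2l // distrC toF_lip.
  rewrite -mulrA ler_norml; apply/andP; split; lra.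
have [c cA cmax] := compact_EVT_max Ane A_compact (@continuous_subspaceT _ _ A _ fcont).
exists (toF c); first by apply: A_dist; move: cA; rewrite inE.
move=> y yd; rewrite -(toF_row y); apply: cmax; rewrite inE; exact: in_A.
Qed.

End Argmax.

End Wrap_A2.

Section Safe.
Variables (R : realType) (S M : finType) (G : cgame R S M) (F : {set S}).
Hypothesis htr : forall s a b, is_distr (trans G s a b).


Lemma safe_S (pi1 pi2 : strategy R S M) n h s : s \in F ->
  safe_n G F pi1 pi2 n.+1 h s =
  step (pi1 h s) (pi2 h s) (trans G s) (fun t => safe_n G F pi1 pi2 n (rcons h s) t).
Proof. by move=> sF; rewrite /= sF. Qed.

Lemma safe_out (pi1 pi2 : strategy R S M) n h s : s \notin F -> safe_n G F pi1 pi2 n h s = 0.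
Proof. by move/negPf=> sF; case: n => /= [|n]; rewrite sF. Qed.

Lemma safe_0 (pi1 pi2 : strategy R S M) h s : s \in F -> safe_n G F pi1 pi2 0 h s = 1.
Proof. by move=> sF; rewrite /= sF. Qed.

Lemma safe_bnd (pi1 pi2 : strategy R S M) : strat1 G pi1 -> strat2 G pi2 ->
  forall n h s, 0 <= safe_n G F pi1 pi2 n h s <= 1.
Proof.
move=> s1 s2; elim=> [|n IH] h s.
  by case: (boolP (s \in F)) => sF; [rewrite safe_0 // ler01 lexx|rewrite safe_out // lexx ler01].
case: (boolP (s \in F)) => sF; last by rewrite safe_out // lexx ler01.
have d1 := (s1 h s).1; have d2 := (s2 h s).1.
rewrite safe_S //; apply/andP; split.
  by apply: step_ge0 => // t; case/andP: (IH (rcons h s) t).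
by apply: step_le1 => // t; case/andP: (IH (rcons h s) t).
Qed.

Lemma safe_mono (pi1 pi2 : strategy R S M) : strat1 G pi1 -> strat2 G pi2 ->
  forall n h s, safe_n G F pi1 pi2 n.+1 h s <= safe_n G F pi1 pi2 n h s.
Proof.
move=> s1 s2; elim=> [|n IH] h s.
  case: (boolP (s \in F)) => sF; last by rewrite !safe_out.
  by rewrite safe_0 //; case/andP: (safe_bnd s1 s2 1 h s).
case: (boolP (s \in F)) => sF; last by rewrite !safe_out.
have d1 := (s1 h s).1; have d2 := (s2 h s).1.
by rewrite !safe_S //; apply: step_le => // t; apply: IH.
Qed.

Lemma safe_monoN (pi1 pi2 : strategy R S M) : strat1 G pi1 -> strat2 G pi2 ->
  forall m n h s, (m <= n)%N -> safe_n G F pi1 pi2 n h s <= safe_n G F pi1 pi2 m h s.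
Proof.
move=> s1 s2 m n h s /subnK <-; elim: (n - m)%N => [|k IH] //.
by rewrite addSn; apply: le_trans IH; apply: safe_mono.
Qed.

Definition shift (p : seq S) (pi : strategy R S M) : strategy R S M :=
  fun h => pi (p ++ h).

Lemma safe_shift (pi1 pi2 : strategy R S M) (p : seq S) : forall n h s,
  safe_n G F pi1 pi2 n (p ++ h) s = safe_n G F (shift p pi1) (shift p pi2) n h s.
Proof.
elim=> [|n IH] h s //=; case: (s \in F) => //.
apply: eq_bigr => a _; apply: eq_bigr => b _; congr (_ * _).
by apply: eq_bigr => t _; rewrite -IH rcons_cat.
Qed.

Lemma safe_agree (pi1 pi2 pi2' : strategy R S M) t :
  (forall h x, head x h = t -> pi2 h x = pi2' h x) ->
  forall n h x, head x h = t ->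
  safe_n G F pi1 pi2 n h x = safe_n G F pi1 pi2' n h x.
Proof.
move=> E; elim=> [|n IH] h x hx //=; case: (x \in F) => //.
apply: eq_bigr => a _; apply: eq_bigr => b _; rewrite (E h x hx); congr (_ * _).
apply: eq_bigr => u _; rewrite IH //.
by case: h hx => //= y h; rewrite headI.
Qed.

Lemma strat1_shift (p : seq S) (pi : strategy R S M) : strat1 G pi -> strat1 G (shift p pi).
Proof. by move=> H h s; apply: H. Qed.

Lemma strat2_shift (p : seq S) (pi : strategy R S M) : strat2 G pi -> strat2 G (shift p pi).
Proof. by move=> H h s; apply: H. Qed.

Lemma Pr_ne (pi1 pi2 : strategy R S M) s : exists x, (fun r => exists n, r = safe_n G F pi1 pi2 n [::] s) x.
Proof. by exists (safe_n G F pi1 pi2 0 [::] s), 0%N. Qed.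

Lemma Pr_le (pi1 pi2 : strategy R S M) : strat1 G pi1 -> strat2 G pi2 -> forall n s,
  Pr_safe G F pi1 pi2 s <= safe_n G F pi1 pi2 n [::] s.
Proof.
move=> s1 s2 n s; apply: (@infP_le _ _ 0); last by exists n.
by move=> y [m ->]; case/andP: (safe_bnd s1 s2 m [::] s).
Qed.

Lemma Pr_ge0 (pi1 pi2 : strategy R S M) : strat1 G pi1 -> strat2 G pi2 -> forall s,
  0 <= Pr_safe G F pi1 pi2 s.
Proof.
move=> s1 s2 s; apply: infP_ge; first exact: Pr_ne.
by move=> y [m ->]; case/andP: (safe_bnd s1 s2 m [::] s).
Qed.

Lemma Pr_le1 (pi1 pi2 : strategy R S M) : strat1 G pi1 -> strat2 G pi2 -> forall s,
  Pr_safe G F pi1 pi2 s <= 1.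
Proof.
move=> s1 s2 s; apply: le_trans (Pr_le s1 s2 0 s) _.
by case/andP: (safe_bnd s1 s2 0 [::] s).
Qed.

Lemma Pr_approx (pi1 pi2 : strategy R S M) : strat1 G pi1 -> strat2 G pi2 -> forall s eps, 0 < eps ->
  exists n, safe_n G F pi1 pi2 n [::] s < Pr_safe G F pi1 pi2 s + eps.
Proof.
move=> s1 s2 s eps e0.
have := @infP_approx _ _ 0 _ e0 (Pr_ne pi1 pi2 s).
case.
  by move=> y [m ->]; case/andP: (safe_bnd s1 s2 m [::] s).
by move=> x [n ->] lt; exists n.
Qed.

End Safe.

Section Val.
Variables (R : realType) (S M : finType) (G : cgame R S M) (F : {set S}).
Hypothesis wf : cgame_wf G.

Lemma htr s a b : is_distr (trans G s a b).
Proof. by case: (wf s) => _ [_]; apply. Qed.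

Lemma set0_ex (B : {set M}) : B != finset.set0 -> exists b, b \in B.
Proof. by case/set0Pn => b; exists b. Qed.

Lemma ex_strat2 : exists pi2 : strategy R S M, strat2 G pi2.
Proof.
have [f Hf] := choice (fun s => set0_ex (wf s).2.1).
by exists (fun _ s => dirac R (f s)) => h s; apply: dirac_on.
Qed.

Lemma ex_strat1 : exists pi1 : strategy R S M, strat1 G pi1.
Proof.
have [f Hf] := choice (fun s => set0_ex (wf s).1).
by exists (fun _ s => dirac R (f s)) => h s; apply: dirac_on.
Qed.

Lemma val_ne (pi1 : strategy R S M) s :
  exists x, (fun r => exists pi2, strat2 G pi2 /\ r = Pr_safe G F pi1 pi2 s) x.
Proof. by have [pi2 H] := ex_strat2; exists (Pr_safe G F pi1 pi2 s), pi2. Qed.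

Section V1.
Variables (pi1 : strategy R S M) (s1 : strat1 G pi1).



Lemma val1_le s pi2 : strat2 G pi2 -> val1_strat G F pi1 s <= Pr_safe G F pi1 pi2 s.
Proof.
move=> s2; apply: (@infP_le _ _ 0); last by exists pi2.
by move=> y [p [sp ->]]; apply: Pr_ge0 => //; apply: htr.
Qed.

Lemma val1_ge0 s : 0 <= val1_strat G F pi1 s.
Proof.
apply: infP_ge; first exact: val_ne.
by move=> y [p [sp ->]]; apply: Pr_ge0 => //; apply: htr.
Qed.

Lemma val1_le1 s : val1_strat G F pi1 s <= 1.
Proof.
have [pi2 H] := ex_strat2; apply: le_trans (val1_le s H) _.
by apply: Pr_le1 => //; apply: htr.
Qed.

Lemma val1_approx s eps : 0 < eps ->
  exists2 pi2, strat2 G pi2 & Pr_safe G F pi1 pi2 s < val1_strat G F pi1 s + eps.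
Proof.
move=> e0; have := @infP_approx _ _ 0 _ e0 (val_ne pi1 s); case.
  by move=> y [p [sp ->]]; apply: Pr_ge0 => //; apply: htr.
by move=> x [p [sp ->]] lt; exists p.
Qed.

End V1.

Lemma value_ne s :
  exists x, (fun r => exists pi1, strat1 G pi1 /\ r = val1_strat G F pi1 s) x.
Proof. by have [pi1 H] := ex_strat1; exists (val1_strat G F pi1 s), pi1. Qed.

Lemma value_ge (pi1 : strategy R S M) s : strat1 G pi1 -> val1_strat G F pi1 s <= value1 G F s.
Proof.
move=> s1; apply: (@supP_le _ _ 1); last by exists pi1.
by move=> y [p [sp ->]]; apply: val1_le1.
Qed.

Lemma value_le s c : (forall pi1, strat1 G pi1 -> val1_strat G F pi1 s <= c) ->
  value1 G F s <= c.
Proof.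
move=> H; apply: supP_ge; first exact: value_ne.
by move=> y [p [sp ->]]; apply: H.
Qed.

Lemma value_le1 s : value1 G F s <= 1.
Proof. by apply: value_le => pi1 s1; apply: val1_le1. Qed.

Lemma value_ge0 s : 0 <= value1 G F s.
Proof.
have [pi1 H] := ex_strat1; apply: le_trans (value_ge s H).
exact: val1_ge0.
Qed.

End Val.

Section Absorb.
Variables (R : realType) (A T : finType).

Lemma sum_dirac (s0 : T) (f : T -> R) : \sum_t (dirac R s0 t * f t) = f s0.
Proof.
rewrite (bigD1 s0) //= /dirac eqxx mul1r big1 ?addr0 // => t /negPf ->.
by rewrite mul0r.
Qed.

Lemma step_absorb (p q : A -> R) (tr : A -> A -> T -> R) (s0 : T) (f : T -> R) :
  is_distr p -> is_distr q ->
  (forall a b, p a != 0 -> q b != 0 -> tr a b = dirac R s0) ->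
  step p q tr f = f s0.
Proof.
move=> hp hq H.
transitivity (step p q (fun _ _ => dirac R s0) f).
  apply: eq_bigr => a _; apply: eq_bigr => b _.
  case: (eqVneq (p a) 0) => [->|pa]; first by rewrite !mul0r.
  case: (eqVneq (q b) 0) => [->|qb]; first by rewrite !(mulr0, mul0r).
  by rewrite (H a b pa qb).
transitivity (step p q (fun _ _ => dirac R s0) (fun _ => f s0)).
  by rewrite /step; apply: eq_bigr => a _; apply: eq_bigr => b _; rewrite !sum_dirac.
by apply: step_cst => // a b; apply: dirac_distr.
Qed.

End Absorb.

Section Values.
Variables (R : realType) (S M : finType) (G : cgame R S M) (F : {set S}).
Hypothesis wf : cgame_wf G.
Hypothesis absorb : forall s, W1 G F s \/ s \notin F ->
     forall a b, a \in mov1 G s -> b \in mov2 G s -> trans G s a b = dirac R s.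

Lemma val_T (pi1 : strategy R S M) s : strat1 G pi1 -> s \notin F ->
  val1_strat G F pi1 s = 0.
Proof.
move=> s1 sF; apply/eqP; rewrite eq_le val1_ge0 // andbT.
have [pi2 s2] := ex_strat2 wf; apply: le_trans (val1_le F wf s1 s s2) _.
apply: le_trans (Pr_le F (htr wf) s1 s2 0 s) _.
by rewrite safe_out.
Qed.

Lemma value_T s : s \notin F -> value1 G F s = 0.
Proof.
move=> sF; apply/eqP; rewrite eq_le value_ge0 // andbT.
by apply: value_le => // pi1 s1; rewrite val_T.
Qed.

Lemma W1_F s : W1 G F s -> s \in F.
Proof.
move=> W; apply/negPn/negP => sF; move: W; rewrite /W1 value_T //.
by move/eqP; rewrite eq_sym oner_eq0.
Qed.

Lemma val_W1 (pi1 : strategy R S M) s : strat1 G pi1 -> W1 G F s ->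
  val1_strat G F pi1 s = 1.
Proof.
move=> s1 W; have sF := W1_F W.
have safe1 : forall pi2, strat2 G pi2 -> forall n h, safe_n G F pi1 pi2 n h s = 1.
  move=> pi2 s2; elim=> [|n IH] h; first by rewrite safe_0.
  rewrite safe_S //; rewrite (@step_absorb _ _ _ _ _ _ s) ?IH //.
  - exact: (s1 h s).1.
  - exact: (s2 h s).1.
  move=> a b pa qb; apply: absorb; first by left.
    by apply: (s1 h s).2.
  by apply: (s2 h s).2.
apply/eqP; rewrite eq_le val1_le1 //=.
apply: infP_ge; first exact: val_ne.
move=> y [pi2 [s2 ->]]; apply: infP_ge; first exact: Pr_ne.
by move=> z [n ->]; rewrite safe1.
Qed.

Lemma unif_selector : selector G (unif_sel G).
Proof.
move=> s; have ne := (wf s).1.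
have cpos : (0 < #|mov1 G s|)%N by rewrite card_gt0.
split; last by move=> a; rewrite /unif_sel; case: (a \in mov1 G s); rewrite ?eqxx.
split.
  by move=> a; rewrite /unif_sel; case: (a \in mov1 G s); rewrite ?invr_ge0 ?ler0n.
rewrite /unif_sel -big_mkcond /= sumr_const.
have key : forall n : nat, (0 < n)%N -> (n%:R : R)^-1 *+ n = 1.
  by move=> n n0; rewrite -[in LHS](mulr_natr (n%:R^-1) n) mulVf // pnatr_eq0 -lt0n.
exact: key.
Qed.

Lemma tb_succ_P1 (v : S -> R) s y : y \in tb_succ G v (inl s) ->
  exists A B, optselcount G v s A B /\ y = inr (inl (s, A, B)).
Proof. by rewrite inE => /asboolP. Qed.

Lemma step_selector (g g' : S -> M -> R) :
  selector G g -> alg_step G F g g' -> selector G g'.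
Proof.
move=> sg [[_ [xi1 [sxi [_ H]]]]|[_ [p [[pP _] [_ H]]]]] s.
  case: (H s) => H1 H2.
  case: (pselect (improvable G F g s)) => Hi; first by rewrite H1.
  by rewrite H2.
case: (H s) => H1 H2.
case: (pselect (in_U G F g s)) => Hu; last by rewrite H2.
have [A [B [_ E]]] := tb_succ_P1 (pP (inl s) erefl).
by case: (H1 Hu A B E) => [[D _] _].
Qed.

Lemma run_selector gammas i : alg_run G F gammas i ->
  forall k, (k <= i)%N -> selector G (gammas k).
Proof.
move=> [g0 Hs]; elim=> [|k IH] ki; first by rewrite g0; exact: unif_selector.
apply: step_selector (IH (ltnW ki)) (Hs k ki).
Qed.

End Values.

Section Pre.
Variables (R : realType) (S M : finType) (G : cgame R S M).
Hypothesis wf : cgame_wf G.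
Variables (u : S -> R) (s : S).

Definition Ku := \sum_t `|u t|.
Definition cf (x2 : M -> R) a := \sum_b x2 b * \sum_t (u t * trans G s a b t).

Lemma preP_lin x x2 : preP G u s x x2 = \sum_a x a * cf x2 a.
Proof.
rewrite /preP /cf; apply: eq_bigr => a _; rewrite big_distrr /=.
apply: eq_bigr => b _; rewrite big_distrr big_distrr /=.
by apply: eq_bigr => t _; ring.
Qed.


Lemma Ku_ge0 : 0 <= Ku.
Proof. by apply: sumr_ge0 => t _. Qed.

Lemma cf_bound x2 a : is_distr x2 -> `|cf x2 a| <= Ku.
Proof.
move=> d2; rewrite /cf; apply: le_trans (ler_norm_sum _ _ _) _.
have <- : \sum_b x2 b * Ku = Ku by rewrite -big_distrl /= (distr_sum d2) mul1r.
  apply: ler_sum => b _; rewrite normrM ger0_norm ?(distr_ge0 d2) //.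
  apply: ler_wpM2l; first exact: (distr_ge0 d2).
  apply: le_trans (ler_norm_sum _ _ _) _; apply: ler_sum => t _.
  rewrite normrM [`|trans G s a b t|]ger0_norm ?(distr_ge0 (htr wf s a b)) //.
  by rewrite ler_piMr // (distr_le1 (htr wf s a b)).
Qed.

Lemma preP_diff x y x2 : is_distr x2 ->
  preP G u s x x2 <= preP G u s y x2 + Ku * \sum_a `|x a - y a|.
Proof.
move=> d2; rewrite -lerBlDl !preP_lin -sumrB big_distrr /=.
apply: ler_sum => a _; rewrite -mulrBl.
apply: le_trans (ler_norm _) _; rewrite normrM mulrC ler_wpM2r //.
exact: cf_bound.
Qed.

Lemma preP0 x2 : preP G u s (fun _ => 0) x2 = 0.
Proof. by rewrite preP_lin big1 // => a _; rewrite mul0r. Qed.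

Lemma preP_lb x x2 : is_distr x2 -> - (Ku * \sum_a `|x a|) <= preP G u s x x2.
Proof.
move=> d2; have := preP_diff (fun _ => 0) x d2; rewrite preP0.
under eq_bigr do rewrite sub0r normrN.
by rewrite -lerBlDr sub0r.
Qed.

Lemma preP_ub x x2 : is_distr x2 -> preP G u s x x2 <= Ku * \sum_a `|x a|.
Proof.
move=> d2; have := preP_diff x (fun _ => 0) d2; rewrite preP0 add0r.
by under eq_bigr do rewrite subr0.
Qed.

Lemma ex_d2 : exists x2 : M -> R, dist_on (mov2 G s) x2.
Proof. by case/set0Pn: (wf s).2.1 => b bm; exists (dirac R b); apply: dirac_on. Qed.

Lemma set1x_ne x : exists r, (fun r => exists x2, dist_on (mov2 G s) x2 /\ r = preP G u s x x2) r.
Proof. by have [x2 d] := ex_d2; exists (preP G u s x x2), x2. Qed.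

Lemma pre1x_le x x2 : dist_on (mov2 G s) x2 -> pre1x G u s x <= preP G u s x x2.
Proof.
move=> d2; apply: (@infP_le _ _ (- (Ku * \sum_a `|x a|))); last by exists x2.
by move=> y [z [dz ->]]; apply: preP_lb; case: dz.
Qed.

Lemma pre1x_ge x c : (forall x2, dist_on (mov2 G s) x2 -> c <= preP G u s x x2) ->
  c <= pre1x G u s x.
Proof. by move=> H; apply: infP_ge; [exact: set1x_ne|move=> y [z [dz ->]]; apply: H]. Qed.

Lemma pre1x_lip x y : pre1x G u s x <= pre1x G u s y + Ku * \sum_a `|x a - y a|.
Proof.
rewrite -lerBlDr; apply: pre1x_ge => x2 d2; rewrite lerBlDr.
exact: le_trans (pre1x_le x d2) (preP_diff x y d2.1).
Qed.

Lemma pre1x_ub x : dist_on (mov1 G s) x -> pre1x G u s x <= Ku.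
Proof.
move=> [d1 _]; have [x2 d2] := ex_d2; apply: le_trans (pre1x_le x d2) _.
apply: le_trans (preP_ub x d2.1) _; rewrite ler_piMr ?Ku_ge0 //.
rewrite (eq_bigr x) ?(distr_sum d1) // => a _; rewrite ger0_norm //; exact: (distr_ge0 d1).
Qed.

Lemma pre1_ne : exists r, (fun r => exists x1, dist_on (mov1 G s) x1 /\ r = pre1x G u s x1) r.
Proof.
case/set0Pn: (wf s).1 => a am; exists (pre1x G u s (dirac R a)), (dirac R a).
by split => //; apply: dirac_on.
Qed.

Lemma pre1x_le_pre1 x : dist_on (mov1 G s) x -> pre1x G u s x <= pre1 G u s.
Proof.
move=> d; apply: (@supP_le _ _ Ku); last by exists x.
by move=> y [z [dz ->]]; apply: pre1x_ub.
Qed.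

Lemma optsel_exists : exists x1, optsel G u s x1.
Proof.
have [x dx xmax] := argmax_exists Ku_ge0 (wf s).1 pre1x_lip.
exists x; split => //; apply/eqP; rewrite eq_le pre1x_le_pre1 //=.
by apply: supP_ge; [exact: pre1_ne| move=> y [z [dz ->]]; apply: xmax].
Qed.

Lemma pre1x_approx x eps : 0 < eps -> exists2 x2, dist_on (mov2 G s) x2 &
  preP G u s x x2 < pre1x G u s x + eps.
Proof.
move=> e0; have := @infP_approx _ _ (- (Ku * \sum_a `|x a|)) _ e0 (set1x_ne x).
case; first by move=> y [z [dz ->]]; apply: preP_lb; case: dz.
by move=> r [x2 [d2 ->]] lt; exists x2.
Qed.

End Pre.

Lemma step_preP (R : realType) (S M : finType) (G : cgame R S M) (f : S -> R) s p q :
  step p q (trans G s) f = preP G f s p q.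
Proof.
rewrite /step /preP; apply: eq_bigr => a _; apply: eq_bigr => b _.
rewrite big_distrr /=; apply: eq_bigr => t _; ring.
Qed.

Lemma ex2_ex (T : Type) (P Q : T -> Prop) : (exists2 x, P x & Q x) -> exists x, P x /\ Q x.
Proof. by case=> x h1 h2; exists x. Qed.

Section Upper.
Variables (R : realType) (S M : finType) (G : cgame R S M) (F : {set S}).
Hypothesis wf : cgame_wf G.
Let w := value1 G F.
Let htr := htr wf.

Lemma val_upper (pi1 : strategy R S M) s eps : strat1 G pi1 -> s \in F -> 0 < eps ->
  val1_strat G F pi1 s <= pre1 G w s + 3%:R * eps.
Proof.
move=> s1 sF e0.
pose x1 := pi1 [::] s.
have d1 : dist_on (mov1 G s) x1 := s1 [::] s.
have [x2 d2 x2lt] := pre1x_approx wf w s x1 e0.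
pose pi1' := shift [:: s] pi1.
have s1' : strat1 G pi1' := strat1_shift [:: s] s1.
have [sig Hsig] := choice (fun t => ex2_ex (val1_approx F wf s1' t e0)).
have [N HN] := choice (fun t => Pr_approx F htr s1' (Hsig t).1 t e0).
pose Nm := (\max_t N t)%N.
have [d2s sd2] := ex_strat2 wf.
pose pi2 : strategy R S M := fun h x => match h with
  | [::] => if x == s then x2 else d2s h x
  | y :: h' => sig (head x h') h' x end.
have s2 : strat2 G pi2.
  move=> [|y h] x /=; last by apply: (Hsig _).1.
  by case: eqP => [->|_] //; apply: sd2.
apply: le_trans (val1_le F wf s1 s s2) _.
apply: le_trans (Pr_le F htr s1 s2 Nm.+1 s) _.
rewrite safe_S //.
have -> : pi2 [::] s = x2 by rewrite /pi2 eqxx.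
have bnd : forall t, safe_n G F pi1 pi2 Nm [:: s] t <= w t + 2%:R * eps.
  move=> t.
  have -> : safe_n G F pi1 pi2 Nm [:: s] t = safe_n G F pi1' (sig t) Nm [::] t.
    rewrite -[[:: s]]cats0 safe_shift.
    by apply: safe_agree => // h x /= E; rewrite /shift /= E.
  apply: le_trans (safe_monoN F htr s1' (Hsig t).1 [::] t (leq_bigmax t)) _.
  apply: le_trans (ltW (HN t)) _.
  have := (Hsig t).2; have := value_ge F wf t s1'.
  rewrite -/w => h1 h2; lra.
apply: le_trans (step_le d1.1 d2.1 (fun a b => htr s a b) bnd) _.
rewrite (step_addc d1.1 d2.1 (fun a b => htr s a b)) (step_preP G w s x1 x2).
have := pre1x_le_pre1 wf w d1; lra.
Qed.

Lemma value_upper s : s \in F -> w s <= pre1 G w s.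
Proof.
move=> sF; apply/ler_addgt0Pr => e e0.
apply: value_le => // pi1 s1.
have e3 : 0 < e / 3%:R by rewrite divr_gt0.
have := val_upper (s1) sF e3.
have -> : 3%:R * (e / 3%:R) = e :> R by rewrite mulrC -mulrA mulVf ?mulr1 // pnatr_eq0.
by [].
Qed.

End Upper.

Section Closed.
Variables (R : realType) (A T : finType).

Lemma step_closed (p q : A -> R) (tr : A -> A -> T -> R) (f : T -> R) :
  is_distr p -> is_distr q -> (forall a b, is_distr (tr a b)) ->
  (forall a b y, p a != 0 -> q b != 0 -> tr a b y != 0 -> f y = 1) ->
  step p q tr f = 1.
Proof.
move=> hp hq htr H.
transitivity (step p q tr (fun _ => 1)); last exact: step_cst.
apply: eq_bigr => a _; apply: eq_bigr => b _.
case: (eqVneq (p a) 0) => [->|pa]; first by rewrite !mul0r.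
case: (eqVneq (q b) 0) => [->|qb]; first by rewrite !(mulr0, mul0r).
congr (_ * _); apply: eq_bigr => y _.
case: (eqVneq (tr a b y) 0) => [->|ty]; first by rewrite !mul0r.
by rewrite (H a b y pa qb ty).
Qed.

Lemma unif_distr (X : {set T}) : X != finset.set0 ->
  is_distr (fun y => if y \in X then (#|X|%:R)^-1 else 0 : R).
Proof.
move=> ne; have cpos : (0 < #|X|)%N by rewrite card_gt0.
split.
  by move=> y; case: (y \in X); rewrite ?invr_ge0 ?ler0n.
rewrite -big_mkcond /= sumr_const.
have key : forall n : nat, (0 < n)%N -> (n%:R : R)^-1 *+ n = 1.
  by move=> n n0; rewrite -[in LHS](mulr_natr (n%:R^-1) n) mulVf // pnatr_eq0 -lt0n.
exact: key.
Qed.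

End Closed.

Section TB.
Variables (R : realType) (S M : finType) (G : cgame R S M) (F : {set S}).
Hypothesis wf : cgame_wf G.
Variables (v : S -> R) (Z : {set S}) (AB : S -> {set M} * {set M}).
Hypotheses (ABok : forall s, optselcount G v s (AB s).1 (AB s).2)
  (ZF : forall s, s \in Z -> s \in F)
  (Zcl : forall s a b t, s \in Z -> a \in (AB s).1 -> b \in (AB s).2 ->
      trans G s a b t != 0 -> t \in Z).

Definition pch (x : tbV S M) : tbV S M :=
  match x with inl s => inr (inl (s, (AB s).1, (AB s).2)) | _ => x end.

Definition Cl (x : tbV S M) : bool :=
  match x with
  | inl s => s \in Z
  | inr (inl (s, A, B)) => [&& s \in Z, A == (AB s).1 & B == (AB s).2]
  | inr (inr (s, A, b)) => [&& s \in Z, A == (AB s).1 & b \in (AB s).2]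
  end.

Lemma edgeP x y : y \in tb_succ G v x <-> tb_edge G v x y.
Proof. by rewrite inE; split => /asboolP. Qed.

Lemma pch_strat : strat1 (tb_game G v) (pm_strat R pch).
Proof.
move=> h [s|[[[s A] B]|[[s A] b]]] /=.
- apply: dirac_on; apply/edgeP; exists (AB s).1, (AB s).2; split=> //.
- by apply: dirac_on; rewrite inE.
- by apply: dirac_on; rewrite inE.
Qed.

Lemma supp_ne (x1 : M -> R) : is_distr x1 -> exists a, x1 a != 0.
Proof.
move=> [_ h1]; case: (pselect (exists a, x1 a != 0)) => // nH.
have : \sum_a x1 a = 0.
  by apply: big1 => a _; apply/eqP/negPn/negP => h; apply: nH; exists a.
by rewrite h1 => /eqP; rewrite oner_eq0.
Qed.

Lemma supp_neT (f : S -> R) : is_distr f -> exists a, f a != 0.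
Proof.
move=> [_ h1]; case: (pselect (exists a, f a != 0)) => // nH.
have : \sum_a f a = 0.
  by apply: big1 => a _; apply/eqP/negPn/negP => h; apply: nH; exists a.
by rewrite h1 => /eqP; rewrite oner_eq0.
Qed.

Lemma dirac_neq0 (X : finType) (x y : X) : dirac R x y != 0 -> y = x.
Proof. by rewrite /dirac; case: (y =P x) => // _; rewrite eqxx. Qed.

Lemma tb_safe (pi2 : strategy R (tbV S M) (tbV S M)) :
  strat2 (tb_game G v) pi2 ->
  forall n h x, Cl x -> safe_n (tb_game G v) (tb_F M F) (pm_strat R pch) pi2 n h x = 1.
Proof.
move=> s2; elim=> [|n IH] h x Cx.
  have xF : x \in tb_F M F.
    by move: Cx; rewrite inE; case: x => [s|[[[s A] B]|[[s A] b]]] /=;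
      [move/ZF|case/and3P => /ZF|case/and3P => /ZF].
  by rewrite /= xF.
have xF : x \in tb_F M F.
  by move: Cx; rewrite inE; case: x => [s|[[[s A] B]|[[s A] b]]] /=;
    [move/ZF|case/and3P => /ZF|case/and3P => /ZF].
rewrite /= xF.
change (step (pm_strat R pch h x) (pi2 h x) (trans (tb_game G v) x)
  (fun t => safe_n (tb_game G v) (tb_F M F) (pm_strat R pch) pi2 n (rcons h x) t) = 1).
have d1 := (pch_strat h x).1; have [d2 supp2] := s2 h x.
case: x Cx xF d1 d2 supp2 => [s|[[[s A] B]|[[s A] b]]] Cx xF d1 d2 supp2.
- apply: step_closed => // [a b|a b y]; first exact: dirac_distr.
  rewrite /pm_strat /= => /dirac_neq0 -> _ /dirac_neq0 ->.
  by apply: IH; rewrite /= !eqxx !andbT; exact: Cx.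
- apply: step_closed => // [a b|a b y]; first exact: dirac_distr.
  case/and3P: Cx => sZ /eqP EA /eqP EB.
  move=> _ /supp2 /edgeP [[_ [b' [b'B ->]]]|[nok _]] /dirac_neq0 ->.
    by apply: IH; rewrite /= sZ EA eqxx -EB b'B.
  by exfalso; apply: nok; rewrite EA EB.
- case/and3P: Cx => sZ /eqP EA bB.
  have hok : exists B, optselcount G v s A B /\ b \in B.
    by exists (AB s).2; rewrite EA.
  have ne : tb_succ G v (inr (inr (s, A, b))) != finset.set0.
    have [x1 [[[dx1 _] _] [Hsupp _]]] := ABok s.
    have [a xa] := supp_ne dx1.
    have [t tt] := supp_neT (htr wf s a b).
    apply/set0Pn; exists (inl t); apply/edgeP; left; split => //.
    by exists a, t; split; [rewrite EA; apply/Hsupp|split].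
  apply: step_closed => // [a0 b0|a0 b0 y _ _].
    exact (unif_distr R ne).
  rewrite /=; case: ifP => [/edgeP [[_ [a [t [aA [tt ->]]]]]|[nok _]]|] // _.
    by apply: IH; rewrite /= (Zcl sZ _ bB tt) // -EA.
  by rewrite eqxx.
Qed.

Lemma tb_as_win s : s \in Z -> as_win G v F (inl s).
Proof.
move=> sZ; exists (pm_strat R pch); split; first exact: pch_strat.
move=> pi2 s2; apply/eqP; rewrite eq_le; apply/andP; split.
  by apply: (@infP_le _ _ 1); [move=> y [n ->]; rewrite tb_safe | exists 0%N; rewrite tb_safe].
by apply: infP_ge; [exact: Pr_ne | move=> y [n ->]; rewrite tb_safe].
Qed.

End TB.

Lemma fin_argmax (R : realType) (X : finType) (f : X -> R) (x0 : X) :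
  exists s0, forall t, f t <= f s0.
Proof.
case: (@arg_maxP _ _ X x0 xpredT f erefl) => s0 _ H.
by exists s0 => t; apply: H.
Qed.

Section StepZero.
Variables (R : realType) (A T : finType).
Lemma step_zero (p q : A -> R) (tr : A -> A -> T -> R) (f : T -> R) a b t :
  is_distr p -> is_distr q -> (forall a b, is_distr (tr a b)) ->
  (forall t, 0 <= f t) -> step p q tr f = 0 ->
  p a != 0 -> q b != 0 -> tr a b t != 0 -> f t = 0.
Proof.
move=> hp hq htr f0 H pa qb tt.
have nn1 : forall a, 0 <= \sum_b (p a * q b * \sum_t (tr a b t * f t)).
  move=> a0; apply: sumr_ge0 => b0 _; apply: mulr_ge0.
    by apply: mulr_ge0; [exact: (distr_ge0 hp)|exact: (distr_ge0 hq)].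
  by apply: sumr_ge0 => t0 _; apply: mulr_ge0 => //; exact: (distr_ge0 (htr a0 b0)).
have H1 := @psumr_eq0P _ _ _ _ (fun a0 _ => nn1 a0) H a isT.
have nn2 : forall b0, 0 <= p a * q b0 * \sum_t (tr a b0 t * f t).
  move=> b0; apply: mulr_ge0.
    by apply: mulr_ge0; [exact: (distr_ge0 hp)|exact: (distr_ge0 hq)].
  by apply: sumr_ge0 => t0 _; apply: mulr_ge0 => //; exact: (distr_ge0 (htr a b0)).
have H2 := @psumr_eq0P _ _ _ _ (fun b0 _ => nn2 b0) H1 b isT.
move/eqP: H2; rewrite !mulf_eq0 (negPf pa) (negPf qb) /= => /eqP H2.
have nn3 : forall t0, 0 <= tr a b t0 * f t0.
  by move=> t0; apply: mulr_ge0 => //; exact: (distr_ge0 (htr a b)).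
have H3 := @psumr_eq0P _ _ _ _ (fun t0 _ => nn3 t0) H2 t isT.
by move/eqP: H3; rewrite mulf_eq0 (negPf tt) /= => /eqP.
Qed.
End StepZero.

Lemma preP_sub (R : realType) (S M : finType) (G : cgame R S M) (f g : S -> R) s x y :
  preP G (fun t => f t - g t) s x y = preP G f s x y - preP G g s x y.
Proof.
rewrite /preP -sumrB; apply: eq_bigr => a _; rewrite -sumrB.
apply: eq_bigr => b _; rewrite -sumrB; apply: eq_bigr => t _; ring.
Qed.

Section Main.
Variables (R : realType) (S M : finType) (G : cgame R S M) (F : {set S}).
Hypothesis wf : cgame_wf G.
Hypothesis absorb : forall s, W1 G F s \/ s \notin F ->
     forall a b, a \in mov1 G s -> b \in mov2 G s -> trans G s a b = dirac R s.

Definition Aof (x1 : M -> R) : {set M} := [set a | x1 a != 0].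
Definition Bof (v : S -> R) s (x1 : M -> R) : {set M} :=
  [set b | `[< b \in mov2 G s /\ preP G v s x1 (dirac R b) = pre1 G v s >]].

Lemma optselcount_of v s x1 : optsel G v s x1 -> optselcount G v s (Aof x1) (Bof v s x1).
Proof.
move=> o; exists x1; split => //; split.
  by move=> a; rewrite inE.
by move=> b; rewrite inE; split => /asboolP.
Qed.

Variable (g : S -> M -> R).
Hypothesis sel : selector G g.
Hypothesis noI : forall s, ~ improvable G F g s.
Hypothesis noU : forall s, ~ in_U G F g s.

Let v := vals G F g.
Let w := value1 G F.
Let htr := htr wf.

Lemma s1g : strat1 G (memoryless g).
Proof. by move=> h s; apply: sel. Qed.

Lemma v_le_w s : v s <= w s.
Proof. exact: value_ge s1g. Qed.

Lemma w_le_v s : w s <= v s.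
Proof.
rewrite leNgt; apply/negP => lt.
pose d t := w t - v t.
have [s0 Hs0] := fin_argmax d s.
pose del := d s0.
have dpos : 0 < del.
  by apply: lt_le_trans (Hs0 s); rewrite /d subr_gt0.
pose Z := [set t | d t == del].
have ZF : forall t, t \in Z -> t \in F.
  move=> t; rewrite inE => /eqP dt; apply/negPn/negP => tF.
  move: dt; rewrite /d /w /v /vals (value_T wf tF) (val_T wf s1g tF).
  by move=> E; move: dpos; rewrite -E subrr ltxx.
have ZW : forall t, t \in Z -> ~ W1 G F t.
  move=> t; rewrite inE => /eqP dt Wt.
  move: dt; rewrite /d /w /v /vals Wt (val_W1 wf absorb s1g Wt).
  by move=> E; move: dpos; rewrite -E subrr ltxx.
have dle : forall t, d t <= del by move=> t; apply: Hs0.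
have key : forall t, t \in Z -> exists x1, optsel G v t x1 /\
    forall a b u, a \in Aof x1 -> b \in Bof v t x1 -> trans G t a b u != 0 -> u \in Z.
  move=> t tZ; have tF := ZF t tZ.
  have [xi [dxi xiopt]] := optsel_exists wf w t.
  have wup : w t <= pre1x G w t xi by rewrite xiopt; apply: value_upper.
  have pvle : pre1 G v t <= v t.
    by rewrite leNgt; apply/negP => H; apply: (noI (s := t)); split; [exact: ZW|split].  
  have Pd : forall x2, dist_on (mov2 G t) x2 -> preP G d t xi x2 <= del.
    move=> x2 d2; rewrite -step_preP -(step_cst dxi.1 d2.1 (fun a b => htr t a b) del).
    by apply: (step_le dxi.1 d2.1 (fun a b => htr t a b)) => u; exact: dle.
  have dt : d t = del by move: tZ; rewrite inE => /eqP.
  have Pv : forall x2, dist_on (mov2 G t) x2 -> w t - del <= preP G v t xi x2.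
    move=> x2 d2; have := Pd x2 d2; rewrite preP_sub.
    have := pre1x_le wf w xi d2; lra.
  have vt : v t = w t - del by rewrite -dt /d; ring.
  have opt : optsel G v t xi.
    split => //; apply/eqP; rewrite eq_le (pre1x_le_pre1 wf v dxi) /=.
    apply: le_trans pvle _; apply: (pre1x_ge wf) => x2 d2; rewrite vt; exact: Pv.
  exists xi; split => // a b u; rewrite [a \in _]inE [b \in _]inE => xa /asboolP [bm Eb] tr0.
  have db : dist_on (mov2 G t) (dirac R b) by apply: dirac_on.
  have ge : del <= preP G d t xi (dirac R b).
    rewrite preP_sub Eb; have := pre1x_le wf w xi db.
    have := wup; have := pvle; have := vt; lra.
  have eqd : preP G d t xi (dirac R b) = del by apply/eqP; rewrite eq_le ge Pd.
  have z : del - d u = 0.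
    apply: (@step_zero R M S xi (dirac R b) (trans G t) (fun t => del - d t) a b u
      dxi.1 (dirac_distr R b) (fun a b => htr t a b)).
    - by move=> u'; rewrite subr_ge0.
    - rewrite step_preP (preP_sub G (fun _ => del) d) eqd -step_preP.
      by rewrite (step_cst dxi.1 (dirac_distr R b) (fun a b => htr t a b)) subrr.
    - exact: xa.
    - by rewrite /dirac eqxx oner_eq0.
    - exact: tr0.
  by rewrite inE; apply/eqP; move/eqP: z; rewrite subr_eq0 => /eqP <-.
have [AB HAB] : exists AB : S -> {set M} * {set M}, forall t,
    optselcount G v t (AB t).1 (AB t).2 /\
    (t \in Z -> forall a b u, a \in (AB t).1 -> b \in (AB t).2 ->
       trans G t a b u != 0 -> u \in Z).
  suff H : forall t, exists ab : {set M} * {set M}, optselcount G v t ab.1 ab.2 /\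
    (t \in Z -> forall a b u, a \in ab.1 -> b \in ab.2 -> trans G t a b u != 0 -> u \in Z).
    by have [f Hf] := choice H; exists f.
  move=> t; case: (boolP (t \in Z)) => tZ.
    have [x1 [o cl]] := key t tZ.
    by exists (Aof x1, Bof v t x1); split => //; apply: optselcount_of.
  have [x1 o] := optsel_exists wf v t.
  exists (Aof x1, Bof v t x1); split; first exact: optselcount_of.
  by [].
have s0Z : s0 \in Z by rewrite inE.
apply: (noU (s := s0)); split; last exact: ZW.
apply: (tb_as_win wf (AB := AB) (fun t => (HAB t).1) ZF _ s0Z).
by move=> t a b u tZ; apply: (HAB t).2.
Qed.

End Main.


Theorem theorem7 (R : realType) (S M : finType) (G : cgame R S M)
    (F : {set S}) (gammas : nat -> S -> M -> R) (i : nat) :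
  cgame_wf G ->
  (* standing assumption: states of W1 \cup T are absorbing *)
  (forall s, W1 G F s \/ s \notin F ->
     forall a b, a \in mov1 G s -> b \in mov2 G s -> trans G s a b = dirac R s) ->
  alg_run G F gammas i ->
  (* I = emptyset *)
  (forall s, ~ improvable G F (gammas i) s) ->
  (* (A_i \cap S) \ W1 = emptyset *)
  (forall s, ~ in_U G F (gammas i) s) ->
  optimal G F (memoryless (gammas i)) /\
  (forall s, vals G F (gammas i) s = value1 G F s).
Proof.
move=> wf absorb run noI noU.
have sel := run_selector wf run (leqnn i).
have E : forall s, vals G F (gammas i) s = value1 G F s.
  move=> s; apply/eqP; rewrite eq_le (v_le_w F wf sel) andTb.
  exact: (w_le_v wf absorb sel noI noU).
split; last exact: E.
by split; [exact: (s1g sel)|exact: E].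
Qed.
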